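(* Let $n\ge1$, $f\in L^2([0,1]^n)$ and $\pi\in S_n$. Then $f$ and $\pi(f)$ have the same best shifted $L$-statistic approximation $f_L$, and $\|\pi(f)-f_L\|=\|f-f_L\|$.
   Context: $L^2([0,1]^n)$ is the space of square integrable real functions on $[0,1]^n$ modulo equality almost everywhere, with norm $\|g\|=(\int_{[0,1]^n}g^2\,d\mathbf{x})^{1/2}$. $S_n$ is the symmetric group on $\{1,\ldots,n\}$, acting on functions by $\pi(f)(x_1,\ldots,x_n)=f(x_{\pi(1)},\ldots,x_{\pi(n)})$. For $\mathbf{x}\in[0,1]^n$, $x_{(1)}\le\cdots\le x_{(n)}$ are its coordinates in ascending order and $\mathrm{os}_k(\mathbf{x})=x_{(k)}$. Let $V_L$ be the span of $\mathrm{os}_1,\ldots,\mathrm{os}_n$ and the constant $1$ (shifted $L$-statistic functions). The best shifted $L$-statistic approximation $f_L$ of $f$ is the unique $g\in V_L$ minimizing $\|f-g\|$. *)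

(* Defs.v *)
From HB Require Import structures.
From mathcomp Require Import all_boot all_order all_algebra all_fingroup.
From mathcomp Require Import all_classical all_reals all_analysis.
Set Implicit Arguments. Unset Strict Implicit. Unset Printing Implicit Defensive.
Import Order.TTheory GRing.Theory Num.Theory.
Local Open Scope classical_set_scope.
Local Open Scope ring_scope.

Section Defs.
Variable R : realType.

(* Iterated Lebesgue integral over [0,1]^n of a function on n-tuples
   (points of R^n); for nonnegative measurable integrands this is the
   integral w.r.t. the n-dimensional Lebesgue measure on [0,1]^n (Tonelli). *)
Fixpoint iint01 (n : nat) : (n.-tuple R -> \bar R) -> \bar R :=
  match n with
  | 0 => fun F => F [tuple]
  | m.+1 => fun F =>
      (\int[@lebesgue_measure R]_(x in `[0%R, 1%R]) iint01 (fun t => F (cons_tuple x t)))%E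
  end.

Definition sq_int (n : nat) (f : n.-tuple R -> R) : Prop :=
  measurable_fun [set: n.-tuple R] f /\
  (iint01 (fun x => (f x ^+ 2)%:E) < +oo)%E.

Definition L2norm (n : nat) (f : n.-tuple R -> R) : R :=
  Num.sqrt (fine (iint01 (fun x => (f x ^+ 2)%:E))).

(* k-th order statistic (0-indexed k : 'I_n, i.e. os_{k+1} in the paper) *)
Definition os (n : nat) (k : 'I_n) (x : n.-tuple R) : R :=
  nth 0 (sort <=%R (tval x)) k.

Definition in_VL (n : nat) (g : n.-tuple R -> R) : Prop :=
  exists (c0 : R) (c : 'I_n -> R),
    forall x, g x = c0 + \sum_(k < n) c k * os k x.

Definition best_L_approx (n : nat) (f g : n.-tuple R -> R) : Prop :=
  in_VL g /\
  forall h, in_VL h -> L2norm (f \- g) <= L2norm (f \- h).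

Definition perm_act (n : nat) (pi : 'S_n) (f : n.-tuple R -> R)
  : n.-tuple R -> R :=
  fun x => f [tuple tnth x (pi i) | i < n].

End Defs.

(* Main.v *)
Require Import Defs.
From HB Require Import structures.
From mathcomp Require Import all_boot all_order all_algebra all_fingroup.
From mathcomp Require Import all_classical all_reals all_analysis.
From mathcomp Require Import measurable_realfun.
Import Order.TTheory GRing.Theory Num.Theory.
Local Open Scope classical_set_scope.
Local Open Scope ring_scope.
Set Implicit Arguments. Unset Strict Implicit.

Section S.
Variable R : realType.
Local Notation leb := (@lebesgue_measure R).
Local Notation I := (`[0%R, 1%R]%classic : set R).

Lemma iint01_ge0 n (F : n.-tuple R -> \bar R) : (forall x, 0 <= F x)%E -> (0 <= iint01 F)%E.
Proof.
elim: n F => [|n IH] F F0 /=; first exact: F0.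
by apply: integral_ge0 => x _; apply: IH => t; apply: F0.
Qed.

Lemma iint01_meas n : forall d (T : measurableType d) (G : T * n.-tuple R -> \bar R),
  measurable_fun [set: (T * n.-tuple R)%type] G -> (forall z, 0 <= G z)%E ->
  measurable_fun setT (fun y => iint01 (fun t => G (y, t))).
Proof.
elim: n => [|n IH] d T G mG G0 /=.
  by apply: measurableT_comp mG _; apply: measurable_fun_pair => //.
pose G' : (T * R)%type * n.-tuple R -> \bar R := fun z => G (z.1.1, cons_tuple z.1.2 z.2).
have mG' : measurable_fun setT G'.
  apply: measurableT_comp mG _; apply: measurable_fun_pair.
    exact: measurableT_comp.
  apply: measurable_cons; first exact: measurableT_comp.
  exact: measurable_snd.
have := IH _ _ G' mG' (fun z => G0 _).
set H := (fun y => _) => mH.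
pose K := H \_ ([set: T] `*` I).
have mK : measurable_fun setT K.
  have mD : measurable ([set: T] `*` I : set (T * R)%type).
    exact: measurableX.
  by apply/(measurable_restrictT H mD); exact: measurable_funS mH.
have K0 : forall z, (0 <= K z)%E.
  move=> z; rewrite /K /patch; case: ifP => // _.
  by apply: iint01_ge0 => t; apply: G0.
have := measurable_fun_fubini_tonelli_F (m2 := leb) K mK K0.
match goal with |- _ -> measurable_fun _ ?g => have -> : g = fubini_F leb K end; last by [].
apply/funext => y.
rewrite /fubini_F [LHS]integral_mkcond; apply: eq_integral => x _.
rewrite /K /patch /=.
have -> : ((y, x) \in [set: T] `*` I) = (x \in I).
  apply/idP/idP => /set_mem.
    by move=> [_ h]; exact/mem_set.
  by move=> h; apply/mem_set.
by [].
Qed.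

Definition act n (g : 'I_n -> 'I_n) (x : n.-tuple R) : n.-tuple R :=
  [tuple tnth x (g i) | i < n].

Lemma act_comp n (g h : 'I_n -> 'I_n) x : act g (act h x) = act (h \o g) x.
Proof. by apply: eq_from_tnth => i; rewrite !tnth_map !tnth_ord_tuple. Qed.

Lemma measurable_act n (g : 'I_n -> 'I_n) : measurable_fun [set: n.-tuple R] (act g).
Proof.
apply/measurable_fun_tnthP => i.
have -> : (@tnth n R ^~ i \o act g) = (@tnth n R ^~ (g i)) by apply/funext => x /=; rewrite tnth_map tnth_ord_tuple.
exact: measurable_tnth.
Qed.

Lemma iint01_ext n (F G : n.-tuple R -> \bar R) : (forall x, F x = G x) -> iint01 F = iint01 G.
Proof. by move=> FG; congr iint01; apply/funext. Qed.

Lemma iint01_swap n (F : n.+2.-tuple R -> \bar R) :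
  measurable_fun [set: n.+2.-tuple R] F -> (forall x, 0 <= F x)%E ->
  iint01 (F \o act (tperm ord0 (lift ord0 ord0))) = iint01 F.
Proof.
move=> mF F0.
pose G : (R * R)%type * n.-tuple R -> \bar R := fun z => F (cons_tuple z.1.1 (cons_tuple z.1.2 z.2)).
have mG : measurable_fun setT G.
  apply: measurableT_comp mF _.
  apply: measurable_cons; first by apply: measurableT_comp; [exact: measurable_fst|exact: measurable_fst].
  apply: measurable_cons; first by apply: measurableT_comp; [exact: measurable_snd|exact: measurable_fst].
  exact: measurable_snd.
have := iint01_meas mG (fun z => F0 _).
set K := (fun y => _) => mK.
have K0 : forall z, (0 <= K z)%E by move=> z; apply: iint01_ge0 => t; apply: F0.
have mKs : measurable_fun setT (fun z : (R * R)%type => K (z.2, z.1)).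
  apply: measurableT_comp mK _; exact: measurable_fun_pair.
have E : forall (L : (R * R)%type -> \bar R), (forall z, 0 <= L z)%E ->
    (\int[leb]_(a in I) \int[leb]_(b in I) L (a, b) =
     \int[leb]_a \int[leb]_b (L \_ (I `*` I)) (a, b))%E.
  move=> L L0; rewrite [LHS]integral_mkcond; apply: eq_integral => a _.
  rewrite /patch; case: ifP => aI.
    rewrite [LHS]integral_mkcond; apply: eq_integral => b _.
    rewrite /patch.
    have -> : ((a, b) \in I `*` I) = (b \in I).
      apply/idP/idP => /set_mem; first by move=> [_ h]; exact/mem_set.
      by move=> h; apply/mem_set; split => //; exact/set_mem.
    by [].
  rewrite integral0_eq // => b _.
  have -> : ((a, b) \in I `*` I) = false.
    apply/negbTE/negP => /set_mem [h _]; move: aI; by rewrite (mem_set h).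
  by [].
have LHS_E : iint01 (F \o act (tperm ord0 (lift ord0 ord0))) =
    (\int[leb]_(a in I) \int[leb]_(b in I) K (b, a))%E.
  rewrite /=; apply: eq_integral => a _; apply: eq_integral => b _.
  rewrite /K /G /=; apply: iint01_ext => t /=; congr F.
  apply: eq_from_tnth => i; rewrite tnth_map tnth_ord_tuple.
  case: i => [[|[|k]] Hk].
  - have -> : Ordinal Hk = ord0 by apply: val_inj.
    by rewrite tpermL !(tnth_nth 0) /=.
  - have -> : Ordinal Hk = lift ord0 ord0 by apply: val_inj.
    by rewrite tpermR !(tnth_nth 0) /=.
  - rewrite tpermD; last 2 first.
    + by apply/eqP => /(congr1 val).
    + by apply/eqP => /(congr1 val).
    by rewrite !(tnth_nth 0) /=.
have RHS_E : iint01 F = (\int[leb]_(a in I) \int[leb]_(b in I) K (a, b))%E.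
  by [].
rewrite LHS_E.
rewrite RHS_E.
apply: (etrans (E (fun z => K (z.2, z.1)) _)); first by move=> z; apply: K0.
apply: esym; apply: (etrans (E K K0)); apply: esym.
have mP : measurable_fun setT (K \_ (I `*` I)).
  have mD : measurable (I `*` I : set (R * R)%type) by exact: measurableX.
  by apply/(measurable_restrictT K mD); exact: measurable_funS mK.
have P0 : forall z, (0 <= (K \_ (I `*` I)) z)%E.
  by move=> z; rewrite /patch; case: ifP.
rewrite (fubini_tonelli (m1:=leb) (m2:=leb) _ mP P0).
apply: eq_integral => a _; apply: eq_integral => b _.
rewrite /patch.
have -> : ((b, a) \in I `*` I) = ((a, b) \in I `*` I).
  by apply/idP/idP => /set_mem [h1 h2]; apply/mem_set.
by [].
Qed.

Lemma iint01S n (F : n.+1.-tuple R -> \bar R) :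
  iint01 F = (\int[leb]_(x in I) iint01 (fun t => F (cons_tuple x t)))%E.
Proof. by []. Qed.

Definition Pinv n := forall (F : n.-tuple R -> \bar R) (g : 'I_n -> 'I_n), injective g ->
  measurable_fun [set: n.-tuple R] F -> (forall x, 0 <= F x)%E ->
  iint01 (F \o act g) = iint01 F.

Definition Ptail n := forall (F : n.+1.-tuple R -> \bar R) (g : 'I_n.+1 -> 'I_n.+1), injective g ->
  g ord0 = ord0 ->
  measurable_fun [set: n.+1.-tuple R] F -> (forall x, 0 <= F x)%E ->
  iint01 (F \o act g) = iint01 F.

Lemma tail_lemma n : Pinv n -> Ptail n.
Proof.
move=> IH F g ginj g0 mF F0.
pose g' (i : 'I_n) : 'I_n := odflt i (unlift ord0 (g (lift ord0 i))).
have hg' : forall i, g (lift ord0 i) = lift ord0 (g' i).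
  move=> i; rewrite /g'; case: unliftP => [j -> //|] h.
  by move: (ginj _ _ (etrans h (esym g0))) => /eqP; rewrite eq_sym (negbTE (neq_lift _ _)).
have g'inj : injective g'.
  by move=> i j hij; apply: (@lift_inj _ ord0); apply: ginj; rewrite !hg' hij.
rewrite !iint01S; apply: eq_integral => a _.
have := IH (fun t => F (cons_tuple a t)) g' g'inj.
have mFa : measurable_fun [set: n.-tuple R] (fun t => F (cons_tuple a t)).
  apply: measurableT_comp mF _; apply: measurable_cons => //.
move=> /(_ mFa (fun t => F0 _)) <-.
apply: iint01_ext => t /=; congr F.
apply: eq_from_tnth => i; rewrite tnth_map tnth_ord_tuple.
case: (unliftP ord0 i) => [j|] ->.
  by rewrite hg' !tnthS tnth_map tnth_ord_tuple.
by rewrite g0 !tnth0.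
Qed.



Lemma transp_lemma m : Ptail m.+1 -> forall k : 'I_m.+2, k != ord0 ->
  forall F : m.+2.-tuple R -> \bar R, measurable_fun setT F -> (forall x, 0 <= F x)%E ->
  iint01 (F \o act (tperm ord0 k)) = iint01 F.
Proof.
move=> tl k k0 F mF F0.
have [k1|k1] := eqVneq k (lift ord0 ord0); first by rewrite k1; exact: iint01_swap.
pose u := tperm (lift ord0 (@ord0 m)) k.
have u0 : u ord0 = ord0 by rewrite tpermD // eq_sym.
have uinj : injective u by exact: perm_inj.
have E : forall x : m.+2.-tuple R, act (tperm ord0 k) x = act u (act (tperm ord0 (lift ord0 ord0)) (act u x)).
  move=> x; rewrite !act_comp; congr act; apply/funext => z /=.
  rewrite /u; case: (tpermP ord0 k z) => [->|->|z0 zk].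
  - by rewrite -/u u0 tpermL /u tpermL.
  - rewrite /u tpermR ?tpermR tpermD //; by rewrite eq_sym.
  - have [z1|z1] := eqVneq z (lift ord0 ord0).
      have k1' : lift ord0 ord0 != k by rewrite eq_sym.
      by rewrite z1 tpermL (@tpermD _ ord0 (lift ord0 ord0) k) 1?eq_sym // tpermR.
    have znk : k != z by apply/eqP => h; apply: zk.
    have z1' : lift ord0 ord0 != z by rewrite eq_sym.
    have zn0 : ord0 != z by apply/eqP => h; apply: z0.
    by rewrite (tpermD z1' znk) (tpermD zn0 z1') (tpermD z1' znk).
have -> : F \o act (tperm ord0 k) = ((F \o act u) \o act (tperm ord0 (lift ord0 ord0))) \o act u.
  by apply/funext => x /=; rewrite E.
have mFu : measurable_fun setT (F \o act u) by apply: measurableT_comp mF (measurable_act _).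
have mFut : measurable_fun setT ((F \o act u) \o act (tperm ord0 (lift ord0 ord0))).
  exact: measurableT_comp mFu (measurable_act _).
rewrite (tl ((F \o act u) \o act (tperm ord0 (lift ord0 ord0))) u uinj u0 mFut (fun x => F0 _)).
rewrite (iint01_swap mFu (fun x => F0 _)).
exact: (tl F u uinj u0 mF F0).
Qed.

Lemma iint01_act n : Pinv n.
Proof.
elim: n => [|n IH] F g ginj mF F0.
  by rewrite /= /comp; congr F; exact: tuple0.
have tl := tail_lemma IH.
have [k0|k0] := eqVneq (g ord0) ord0; first exact: tl.
case: n IH tl F g ginj mF F0 k0 => [|m] IH tl F g ginj mF F0 k0.
  by move: k0; rewrite (ord1 (g ord0)) eqxx.
set k := g ord0 in k0.
pose s := tperm ord0 k.
have E : F \o act g = (F \o act (s \o g)) \o act s.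
  apply/funext => x /=; rewrite act_comp; congr (F (act _ x)).
  by apply/funext => z /=; rewrite tpermK.
have sginj : injective (s \o g) by apply: inj_comp => //; exact: perm_inj.
have sg0 : (s \o g) ord0 = ord0 by rewrite /= /s -/k tpermR.
have mFsg : measurable_fun setT (F \o act (s \o g)).
  exact: measurableT_comp mF (measurable_act _).
rewrite E (transp_lemma tl k0 mFsg (fun x => F0 _)).
exact: (tl F (s \o g) sginj sg0 mF F0).
Qed.

Lemma act_perm_eq n (p : 'S_n) (x : n.-tuple R) : perm_eq (act p x) x.
Proof. by apply/tuple_permP; exists p. Qed.

Lemma sort_act n (p : 'S_n) (x : n.-tuple R) : sort <=%R (tval (act p x)) = sort <=%R (tval x).
Proof.
apply/perm_sortP; [exact: le_total | exact: le_trans | exact: le_anti | exact: act_perm_eq].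
Qed.

Lemma os_act n (p : 'S_n) k (x : n.-tuple R) : os k (act p x) = os k x.
Proof. by rewrite /os sort_act. Qed.
Lemma tnth_act n (g : 'I_n -> 'I_n) (x : n.-tuple R) i : tnth (act g x) i = tnth x (g i).
Proof. by rewrite tnth_map tnth_ord_tuple. Qed.

Lemma measurable_os n (k : 'I_n) : measurable_fun [set: n.-tuple R] (os k).
Proof.
move=> _ B mB; rewrite setTI.
pose C (p : 'S_n) := \bigcap_(ij in [set: ('I_n * 'I_n)%type])
   [set x : n.-tuple R | (ij.1 <= ij.2)%N -> tnth x (p ij.1) <= tnth x (p ij.2)].
have mC : forall p, measurable (C p).
  move=> p; apply: fin_bigcap_measurable; first exact: finite_finset.
  move=> -[i j] _.
  change (measurable [set x : n.-tuple R | (i <= j)%N -> tnth x (p i) <= tnth x (p j)]).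
  case: (leqP i j) => ij.
    have -> : [set x : n.-tuple R | true -> tnth x (p i) <= tnth x (p j)] =
        (fun x => tnth x (p i) <= tnth x (p j)) @^-1` [set true].
      by apply/seteqP; split => x /=; [move=> h; exact: h | move=> h _; exact: h].
    rewrite -[X in measurable X]setTI.
    apply: (measurable_fun_ler (measurable_tnth _) (measurable_tnth _)) => //.
  have -> : [set x : n.-tuple R | false -> tnth x (p i) <= tnth x (p j)] = setT.
    by apply/seteqP; split => x.
  exact: measurableT.
have key : os k @^-1` B = \bigcup_(p in [set: 'S_n]) (C p `&` (fun x => tnth x (p k)) @^-1` B).
  apply/seteqP; split.
    move=> x /= Bx.
    have /tuple_permP [p hp] : perm_eq (sort <=%R (tval x)) x by rewrite perm_sort.
    exists p => //; split.
      move=> [i j] _ /= ij.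
      have so := sort_sorted (@le_total _ R) x; rewrite hp in so.
      rewrite -!tnth_act !(tnth_nth 0).
      apply: (sorted_leq_nth le_trans lexx) => //; by rewrite inE size_tuple.
    by move: Bx; rewrite /= /os hp -tnth_nth tnth_act.
  move=> x [p _ [Cx Bx]] /=.
  have so : sorted <=%R (tval (act p x)).
    apply/(sortedP 0) => i; rewrite size_tuple => hi.
    have := Cx (Ordinal (ltnW hi), Ordinal hi) Logic.I (leqnSn i).
    by rewrite /= -!tnth_act !(tnth_nth 0).
  rewrite /os -(sort_act p x) (sorted_sort le_trans so).
  by rewrite -tnth_nth tnth_act.
rewrite key; apply: fin_bigcup_measurable; first exact: finite_finset.
move=> p _; apply: measurableI; first exact: mC.
rewrite -[X in measurable X]setTI; exact: measurable_tnth.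
Qed.

Lemma VL_act n (p : 'S_n) (h : n.-tuple R -> R) : in_VL h -> forall x, h (act p x) = h x.
Proof.
move=> [c0 [c Eh]] x; rewrite !Eh; congr (_ + _); apply: eq_bigr => k _.
by rewrite os_act.
Qed.

Lemma VL_meas n (h : n.-tuple R -> R) : in_VL h -> measurable_fun setT h.
Proof.
move=> [c0 [c Eh]].
have -> : h = (fun x => c0 + \sum_(k < n) c k * os k x) by apply/funext => x; exact: Eh.
apply: measurable_funD => //.
apply: measurable_sum => k; apply: measurable_funM => //; exact: measurable_os.
Qed.

Lemma L2norm_act n (p : 'S_n) (f h : n.-tuple R -> R) :
  measurable_fun setT f -> in_VL h ->
  L2norm (perm_act p f \- h) = L2norm (f \- h).
Proof.
move=> mf hVL; rewrite /L2norm; congr (Num.sqrt (fine _)).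
have -> : iint01 (fun x => (((perm_act p f) \- h) x ^+ 2)%:E) =
    iint01 ((fun x => ((f \- h) x ^+ 2)%:E) \o act p).
  by apply: iint01_ext => x /=; rewrite /perm_act -(VL_act p hVL x).
apply: iint01_act; first exact: perm_inj.
  apply/measurable_EFinP; rewrite (_ : (fun x => _) = (f \- h) \* (f \- h)).
    apply: measurable_funM; apply: measurable_funB => //; exact: VL_meas.
  by apply/funext => x; rewrite /= expr2.
by move=> x; rewrite lee_fin sqr_ge0.
Qed.

End S.

Unset Implicit Arguments. Set Strict Implicit.

Theorem proposition10 (R : realType) (n : nat) (f : n.-tuple R -> R)
    (pi : 'S_n) (fL : n.-tuple R -> R) :
  (1 <= n)%N -> sq_int f -> best_L_approx f fL ->
  best_L_approx (perm_act pi f) fL /\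
  L2norm (perm_act pi f \- fL) = L2norm (f \- fL).
Proof.
move=> _ [mf _] [hVL hmin]; split; last exact: L2norm_act.
split => // h hh; rewrite !L2norm_act //; exact: hmin.
Qed.
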